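(* Let $p=1$, $C_{\mathcal Y}>0$, and suppose there exist $x_1,x_2,x_3\in\mathcal X$ with $d_{\mathcal X}(x_3,x_1)=d_{\mathcal X}(x_3,x_2)=C_{\mathcal X}$ and $y_1\in\mathcal Y$ with $d_{\mathcal Y}(y_0,y_1)=C_{\mathcal Y}$. Let $\tilde d$ be defined by the GOSPA2 formula with $p=1$ but with penalty $C_2=C_{\mathcal X}+\frac12C_{\mathcal Y}$. Consider the graphs $G_1=([1],v,e)$ with $v_1=x_3$; $G_2=([2],w,f)$ with $w_1=x_1,w_2=x_2$, $f_{12}=f_{21}=y_1$ and $f_{ij}=y_0$ otherwise; $G_3=([3],u,g)$ with $u_i=x_i$ ($i\in[3]$), $g_{12}=g_{21}=y_1$ and $g_{ij}=y_0$ otherwise. Then $\tilde d(G_1,G_2)=C_2+\frac14C_{\mathcal Y}$ while $\tilde d(G_1,G_3)+\tilde d(G_3,G_2)\le C_2+\frac16C_{\mathcal Y}$; in particular $\tilde d$ violates the triangle inequality.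
   Context: Let $(\mathcal X,d_{\mathcal X})$ and $(\mathcal Y,d_{\mathcal Y})$ be pseudometric spaces with $\mathrm{diam}(\mathcal X)\le C_{\mathcal X}$, $\mathrm{diam}(\mathcal Y)\le C_{\mathcal Y}$, with a distinguished element $y_0\in\mathcal Y$ meaning ''no edge''. For $n\in\mathbb N_0$ write $[n]=\{1,\dots,n\}$ and $S_n$ for the permutations of $[n]$. An attributed simple graph is a triple $([n],v,e)$ with $v:[n]\to\mathcal X$ and $e:[n]^2\to\mathcal Y$ symmetric with $e(i,i)=y_0$; write $v_i=v(i)$, $e_{ii'}=e(i,i')$. The GOSPA2 formula with order $p$ and penalty $C_2$: for $([m],v,e),([n],w,f)$ with $n\ge\max\{m,1\}$ (otherwise swap), with $0/0:=0$, $$\frac{1}{n^{1/p}}\min_{\pi\in S_n}\Big[(n-m)C_2^p+\sum_{i\in[m]}d_{\mathcal X}(v_i,w_{\pi(i)})^p+\frac12\frac1{n-1}\Big(\sum_{(i,i')\in[m]^2}d_{\mathcal Y}(e_{ii'},f_{\pi(i)\pi(i')})^p+\sum_{(i,i')\in[n]^2\setminus[m]^2}d_{\mathcal Y}(y_0,f_{\pi(i)\pi(i')})^p\Big)\Big]^{1/p}.$$ *)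

(* Defs.v *)
From HB Require Import structures.
From mathcomp Require Import all_boot all_order all_algebra all_fingroup.
From mathcomp Require Import reals exp.
Set Implicit Arguments. Unset Strict Implicit. Unset Printing Implicit Defensive.
Import Order.TTheory GRing.Theory Num.Theory.
Local Open Scope ring_scope.

(* An attributed graph on vertex set {0,...,gsize-1} (0-based version of [n]);
   values of gv / ge outside this range are irrelevant. *)
Record agraph (X Y : Type) := AGraph {
  gsize : nat;
  gv : nat -> X;
  ge : nat -> nat -> Y }.

Definition is_simple_agraph (X Y : Type) (y0 : Y) (G : agraph X Y) : Prop :=
  (forall i j, (i < gsize G)%N -> (j < gsize G)%N -> ge G i j = ge G j i) /\
  (forall i, (i < gsize G)%N -> ge G i i = y0).

Section Gospa.
Variables (R : realType) (X Y : Type).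

(* cost of permutation s : 'S_n, graphs G (m vertices) and H (n vertices), m <= n *)
Definition gospa2_cost (p C2 : R) (dX : X -> X -> R) (dY : Y -> Y -> R) (y0 : Y)
  (G H : agraph X Y) (n : nat) (s : 'S_n) : R :=
  let m := gsize G in
  (n - m)%:R * C2 `^ p
  + (\sum_(i < n | (i < m)%N) dX (gv G i) (gv H (s i)) `^ p)
  + 2^-1 * (n.-1%:R)^-1 *
    (\sum_(i < n) \sum_(i' < n)
        (if (i < m)%N && (i' < m)%N
         then dY (ge G i i') (ge H (s i) (s i')) `^ p
         else dY y0 (ge H (s i) (s i')) `^ p)).
(* Note: in MathComp 0^-1 = 0, which realizes the convention 0/0 := 0 *)

Definition gospa2_core (p C2 : R) dX dY (y0 : Y) (G H : agraph X Y) : R :=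
  let n := gsize H in
  if n == 0%N then 0 else
  (n%:R `^ p^-1)^-1 *
  (\big[Num.min/gospa2_cost p C2 dX dY y0 G H (1 : 'S_n)]_(s : 'S_n)
      gospa2_cost p C2 dX dY y0 G H s) `^ p^-1.

Definition gospa2 (p C2 : R) dX dY (y0 : Y) (G H : agraph X Y) : R :=
  if (gsize G <= gsize H)%N then gospa2_core p C2 dX dY y0 G H
  else gospa2_core p C2 dX dY y0 H G.
End Gospa.

(* the three graphs of the statement (0-based: vertex k here is vertex k+1) *)
Definition edge12 (Y : Type) (y0 y1 : Y) (i j : nat) : Y :=
  if ((i == 0) && (j == 1)) || ((i == 1) && (j == 0)) then y1 else y0.

Definition graphG1 (X Y : Type) (x3 : X) (y0 : Y) : agraph X Y :=
  AGraph 1 (fun _ => x3) (fun _ _ => y0).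

Definition graphG2 (X Y : Type) (x1 x2 : X) (y0 y1 : Y) : agraph X Y :=
  AGraph 2 (fun i => if i == 0 then x1 else x2) (edge12 y0 y1).

Definition graphG3 (X Y : Type) (x1 x2 x3 : X) (y0 y1 : Y) : agraph X Y :=
  AGraph 3 (fun i => if i == 0 then x1 else if i == 1 then x2 else x3)
    (edge12 y0 y1).

Definition is_pseudometric (R : realType) (T : Type) (d : T -> T -> R) : Prop :=
  (forall a, d a a = 0) /\ (forall a b, d a b = d b a) /\
  (forall a b c, d a c <= d a b + d b c).

(* Main.v *)
Require Import Defs.
From HB Require Import structures.
From mathcomp Require Import all_boot all_order all_algebra all_fingroup.
From mathcomp Require Import reals exp.
From mathcomp Require Import lra.
Import Order.TTheory GRing.Theory Num.Theory.
Local Open Scope ring_scope.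

Lemma big_min_le (R : realType) (I : finType) (c : R) (F : I -> R) (i0 : I) :
  \big[Num.min/c]_(i : I) F i <= F i0.
Proof. by rewrite (bigD1 i0) //= ge_min lexx. Qed.

Lemma big_min_ge0 (R : realType) (I : finType) (c : R) (F : I -> R) :
  0 <= c -> (forall i, 0 <= F i) -> 0 <= \big[Num.min/c]_(i : I) F i.
Proof.
move=> hc hF; apply: (big_ind (fun x => 0 <= x)) => // x y hx hy.
by rewrite le_min hx hy.
Qed.

Lemma big_min_const (R : realType) (I : finType) (c : R) (F : I -> R) :
  (forall i, F i = c) -> \big[Num.min/c]_(i : I) F i = c.
Proof.
move=> hF; apply: (big_ind (fun x => x = c)) => // x y -> ->.
by rewrite minxx.
Qed.

Lemma sum_perm2 (R : realType) n (s : 'S_n) (F : 'I_n -> 'I_n -> R) :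
  \sum_i \sum_j F (s i) (s j) = \sum_i \sum_j F i j.
Proof.
symmetry; rewrite (reindex_inj (@perm_inj _ s)) /=.
by apply: eq_bigr => i _; rewrite (reindex_inj (@perm_inj _ s)).
Qed.

Lemma cost_ge0 (R : realType) X Y p C2 dX dY (y0 : Y) (G H : agraph X Y) n (s : 'S_n) :
  0 <= C2 -> 0 <= gospa2_cost (R:=R) p C2 dX dY y0 G H s.
Proof.
move=> hC; rewrite /gospa2_cost.
apply: addr_ge0; first apply: addr_ge0.
- by apply: mulr_ge0; [apply: ler0n | apply: powR_ge0].
- by apply: sumr_ge0 => i _; apply: powR_ge0.
- apply: mulr_ge0; first by apply: mulr_ge0; rewrite invr_ge0 ?ler0n.
  apply: sumr_ge0 => i _; apply: sumr_ge0 => j _; case: ifP => _; apply: powR_ge0.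
Qed.

Lemma big_min_const2 (R : realType) (I : finType) (c d : R) (F : I -> R) :
  d = c -> (forall i, F i = c) -> \big[Num.min/d]_(i : I) F i = c.
Proof.
move=> -> hF; apply: (big_ind (fun x => x = c)) => // x y -> ->.
by rewrite minxx.
Qed.

Lemma fin2 (R : realType) (a b C2 CX CY : R) : C2 = CX + 2^-1 * CY -> 0 < CY ->
  a <= 2 * C2 + 2^-1 * CY -> b <= C2 -> 3^-1 * a + 3^-1 * b <= C2 + 6^-1 * CY.
Proof. move=> -> *; lra. Qed.
Lemma fin3 (R : realType) (a b C2 CX CY : R) : C2 = CX + 2^-1 * CY -> 0 < CY ->
  a <= 2 * C2 + 2^-1 * CY -> b <= C2 -> 3^-1 * a + 3^-1 * b < 2^-1 * (C2 + CX + CY).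
Proof. move=> -> *; lra. Qed.

Theorem mainTheorem10 (R : realType) (X Y : Type)
  (dX : X -> X -> R) (dY : Y -> Y -> R) (CX CY : R) (y0 : Y)
  (hdX : is_pseudometric dX) (hdY : is_pseudometric dY)
  (hdiamX : forall a b, dX a b <= CX) (hdiamY : forall a b, dY a b <= CY)
  (hCY : 0 < CY)
  (x1 x2 x3 : X) (y1 : Y)
  (h31 : dX x3 x1 = CX) (h32 : dX x3 x2 = CX) (h01 : dY y0 y1 = CY) :
  let C2 := CX + 2^-1 * CY in
  let dt := gospa2 1 C2 dX dY y0 in
  let G1 := graphG1 x3 y0 in
  let G2 := graphG2 x1 x2 y0 y1 in
  let G3 := graphG3 x1 x2 x3 y0 y1 in
  [/\ dt G1 G2 = C2 + 4^-1 * CY,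
      dt G1 G3 + dt G3 G2 <= C2 + 6^-1 * CY
    & dt G1 G3 + dt G3 G2 < dt G1 G2].
Proof.
move=> C2 dt G1 G2 G3.
have dXge0 a b : 0 <= dX a b.
  case: hdX => h0 [hs ht]; have := ht a b a; rewrite h0 hs; lra.
have dYge0 a b : 0 <= dY a b.
  case: hdY => h0 [hs ht]; have := ht a b a; rewrite h0 hs; lra.
have dXaa a : dX a a = 0 by case: hdX.
have dYaa a : dY a a = 0 by case: hdY.
have CXge0 : 0 <= CX by rewrite -h31.
have C2ge0 : 0 <= C2 by rewrite /C2; lra.
have dXp a b : dX a b `^ 1 = dX a b by rewrite powRr1.
have dYp a b : dY a b `^ 1 = dY a b by rewrite powRr1.
rewrite /dt /gospa2 /= /gospa2_core /= invr1 !powRr1 ?ler0n //;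
  try (apply: big_min_ge0; [exact: cost_ge0| move=> s; exact: cost_ge0]).
have c12 (s : 'S_2) : gospa2_cost 1 C2 dX dY y0 G1 G2 s = C2 + CX + CY.
  rewrite /gospa2_cost /=.
  rewrite [X in 2^-1 / 1 * X](_ : _ = \sum_(i<2)\sum_(j<2) dY y0 (edge12 y0 y1 (s i) (s j)) `^ 1); last first.
    by apply: eq_bigr => i _; apply: eq_bigr => j _; rewrite if_same.
  rewrite (@sum_perm2 _ _ s (fun i j : 'I_2 => dY y0 (edge12 y0 y1 i j) `^ 1)).
  rewrite big_mkcond /= !big_ord_recr !big_ord0 /=.
  rewrite /edge12 /= !dYp !dXp dYaa h01 powRr1 // (_ : (2-1)%N = 1%N) // mul1r.
  case: ifP => _; rewrite ?h31 ?h32; lra.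
have c13 : gospa2_cost 1 C2 dX dY y0 G1 G3 (tperm (ord0 : 'I_3) ord_max) = 2 * C2 + 2^-1 * CY.
  set s := tperm _ _.
  rewrite /gospa2_cost /=.
  rewrite [X in _ + _ * X](_ : _ = \sum_(i<3)\sum_(j<3) dY y0 (edge12 y0 y1 (s i) (s j)) `^ 1); last first.
    by apply: eq_bigr => i _; apply: eq_bigr => j _; rewrite if_same.
  rewrite (@sum_perm2 _ _ s (fun i j : 'I_3 => dY y0 (edge12 y0 y1 i j) `^ 1)).
  rewrite big_mkcond /= !big_ord_recr !big_ord0 /= permE /=.
  rewrite /edge12 /= !dYp !dXp dYaa dXaa h01 powRr1 // (_ : (3-1)%N = 2%N) //; lra.
have c23 : gospa2_cost 1 C2 dX dY y0 G2 G3 (1 : 'S_3) = C2.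
  rewrite /gospa2_cost /= !big_mkcond /= !big_ord_recr !big_ord0 /= !perm1 /=.
  rewrite /edge12 /= !dYp !dXp !dYaa !dXaa powRr1 // (_ : (3-2)%N = 1%N) //; lra.
have m12 : \big[Num.min/gospa2_cost 1 C2 dX dY y0 G1 G2 (1 : 'S_2)]_(s : 'S_2)
         gospa2_cost 1 C2 dX dY y0 G1 G2 s = C2 + CX + CY.
  apply: big_min_const2 => [|s]; exact: c12.
have m13 := @big_min_le _ _ (gospa2_cost 1 C2 dX dY y0 G1 G3 (1 : 'S_3))
   (@gospa2_cost _ _ _ 1 C2 dX dY y0 G1 G3 3) (tperm (ord0 : 'I_3) ord_max).
have m23 := @big_min_le _ _ (gospa2_cost 1 C2 dX dY y0 G2 G3 (1 : 'S_3))
   (@gospa2_cost _ _ _ 1 C2 dX dY y0 G2 G3 3) (1%g : {perm 'I_3}).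
rewrite c13 in m13; move: m23; rewrite [X in _ <= X]c23 => m23; rewrite m12.
have hC2 : C2 = CX + 2^-1 * CY by [].
split.
- rewrite hC2; lra.
- exact (@fin2 R _ _ _ _ _ hC2 hCY m13 m23).
- exact (@fin3 R _ _ _ _ _ hC2 hCY m13 m23).
Qed.
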